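(* Let $\Gamma\curvearrowright^{\sigma}(X,\mu)$ be a probability measure preserving action of a countable group $\Gamma$ with spectral gap. Then the natural homomorphism $\mathrm H^1(\Gamma,\mathrm L^2(X,\mathbb R))\to\mathrm H^1(\Gamma,\mathrm L^0(X,\mathbb R))$ is injective.
   Context: $\Gamma$ acts on functions by $\sigma_g(f)(x)=f(g^{-1}x)$. The action has spectral gap if the Koopman representation on $\mathrm L^2(X,\mu)\ominus\mathbb C1$ has no almost invariant vectors; equivalently there are finite $F\subset\Gamma$ and $C>0$ with $\|\xi-\int\xi\,d\mu\|_2\le C\max_{g\in F}\|\sigma_g(\xi)-\xi\|_2$ for all $\xi\in\mathrm L^2(X)$. $\mathrm H^1(\Gamma,\mathcal A)$ is the group of 1-cocycles $c(gh)=c(g)+\sigma_g(c(h))$ modulo 1-coboundaries $c(g)=\sigma_g(b)-b$, $b\in\mathcal A$; $\mathrm L^0(X,\mathbb R)$ denotes a.e.-classes of measurable real functions. *)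

(* Defs.v *)
From HB Require Import structures.
From mathcomp Require Import all_boot all_order all_algebra.
From mathcomp Require Import monoid.
From mathcomp Require Import all_classical all_reals all_analysis.
Set Implicit Arguments. Unset Strict Implicit. Unset Printing Implicit Defensive.
Import Order.TTheory GRing.Theory Num.Theory.
Local Open Scope classical_set_scope.
Local Open Scope ring_scope.

#[short(type="countGroupType")]
HB.structure Definition CountGroup := {G of Group G & Countable G}.

Section Defs.
Context {G : countGroupType} {d : measure_display} {X : measurableType d}
  {R : realType}.

Definition pmp_action (mu : probability X R) (a : G -> X -> X) : Prop :=
  [/\ forall x, a (monoid.one : G) x = x,
      forall g h x, a (monoid.mul g h) x = a g (a h x),
      forall g, measurable_fun setT (a g) &
      forall g (A : set X), measurable A -> mu (a g @^-1` A) = mu A].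

Definition koopman (a : G -> X -> X) (g : G) (f : X -> R) : X -> R :=
  fun x => f (a (monoid.inv g) x).

Definition L2norm (mu : probability X R) (f : X -> R) : \bar R :=
  Lnorm mu 2%:E (EFin \o f).

Definition inL2 (mu : probability X R) (f : X -> R) : Prop :=
  measurable_fun setT f /\ finite_norm mu 2%:E f.

Definition spectral_gap (mu : probability X R) (a : G -> X -> X) : Prop :=
  exists (F : seq G) (C : R), 0 < C /\
    forall xi : X -> R, inL2 mu xi ->
      (L2norm mu (fun x => xi x - Rintegral mu setT xi)%R
        <= C%:E * \big[maxe/0%E]_(g <- F)
                     L2norm mu (fun x => koopman a g xi x - xi x)%R)%E.

(* 1-cocycle condition, almost everywhere (elements of L^0 / L^2 are
   a.e.-classes): c(gh) = c(g) + sigma_g(c(h)). *)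
Definition cocycle (mu : probability X R) (a : G -> X -> X)
  (c : G -> X -> R) : Prop :=
  forall g h, {ae mu, forall x,
    c (monoid.mul g h) x = c g x + koopman a g (c h) x}.

Definition coboundary_of (mu : probability X R) (a : G -> X -> X)
  (c : G -> X -> R) (b : X -> R) : Prop :=
  forall g, {ae mu, forall x, c g x = koopman a g b x - b x}.
End Defs.

(* Main.v *)
Require Import Defs.
From HB Require Import structures.
From mathcomp Require Import all_boot all_order all_algebra.
From mathcomp Require Import all_classical all_reals all_analysis.
From mathcomp Require Import measurable_realfun ring lra.
Set Implicit Arguments. Unset Strict Implicit. Unset Printing Implicit Defensive.
Import Order.TTheory GRing.Theory Num.Theory.
Local Open Scope classical_set_scope.
Local Open Scope ring_scope.

Section P.
Context (R : realType).
Definition psi (N M u : R) := Num.min (Num.max (u - N) 0) M.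
Lemma psi_lip N M u w : 0 <= M -> `|psi N M u - psi N M w| <= `|u - w|.
Proof.
move=> M0; rewrite /psi.
have H1 := ler_norm (u - w); have H2 := ler_norm (w - u); rewrite distrC in H2.
case: (leP (u - N) 0) => h1; case: (leP (w - N) 0) => h2;
  rewrite ?(minEle, maxEle);
  rewrite ?M0; case: (leP (u - N) M) => ?; case: (leP (w - N) M) => ?;
  rewrite ler_norml; apply/andP; split; lra.
Qed.
Lemma psi_lip2 N M s t : 0 <= M -> (psi N M `|s| - psi N M `|t|) ^+ 2 <= (s - t) ^+ 2.
Proof.
move=> M0; rewrite -[X in X <= _]real_normK ?num_real// -[X in _ <= X]real_normK ?num_real//.
rewrite lerXn2r ?nnegrE//.
apply: le_trans (@psi_lip N M `|s| `|t| M0) _; exact: ler_dist_dist.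
Qed.
End P.

Section H.
Context d (X : measurableType d) (R : realType) (mu : probability X R).
Local Open Scope ereal_scope.

Definition J (h : X -> R) : \bar R := \int[mu]_x ((h x)^+2)%:E.

Lemma mJ (h : X -> R) : measurable_fun setT h ->
  measurable_fun setT (fun x => ((h x)^+2)%:E).
Proof. by move=> mh; apply/measurable_EFinP; exact: measurable_funX. Qed.

Lemma J_ge0 h : 0 <= J h.
Proof. by apply: integral_ge0 => x _; rewrite lee_fin sqr_ge0. Qed.

Lemma L2normE h : L2norm mu h = J h `^ 2^-1.
Proof.
rewrite /L2norm unlock /J; congr (_ `^ _); apply: eq_integral => x _ /=.
by rewrite powR_mulrn// real_normK// num_real.
Qed.

Lemma J_L2norm h : J h = L2norm mu h `^ 2.
Proof. by rewrite L2normE -poweRrM mulVf// poweRe1// J_ge0. Qed.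

Lemma L2norm_le (h1 h2 : X -> R) : measurable_fun setT h1 -> measurable_fun setT h2 ->
  {ae mu, forall x, (h1 x ^+ 2 <= h2 x ^+ 2)%R} -> L2norm mu h1 <= L2norm mu h2.
Proof.
move=> m1 m2 ae; rewrite !L2normE; apply: gt0_ler_poweR.
- by rewrite invr_ge0.
- by rewrite in_itv/= J_ge0 leey.
- by rewrite in_itv/= J_ge0 leey.
apply: ae_ge0_le_integral => //; first by move=> x _; rewrite lee_fin sqr_ge0.
- exact: mJ.
- by move=> x _; rewrite lee_fin sqr_ge0.
- exact: mJ.
by apply: filterS ae => x h _; rewrite lee_fin.
Qed.

Lemma finite_of_J h : J h < +oo -> finite_norm mu 2%:E h.
Proof. by move=> h1; rewrite /finite_norm -/(L2norm mu h) L2normE poweR_lty. Qed.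


Lemma J_mono (h1 h2 : X -> R) : measurable_fun setT h1 -> measurable_fun setT h2 ->
  (forall x, (h1 x ^+ 2 <= h2 x ^+ 2)%R) -> J h1 <= J h2.
Proof.
move=> m1 m2 h; apply: ge0_le_integral => //.
- by move=> x _; rewrite lee_fin sqr_ge0.
- exact: mJ.
- exact: mJ.
by move=> x _; rewrite lee_fin.
Qed.

Lemma J_split (h : X -> R) (m : R) : measurable_fun setT h ->
  J h <= 2%:E * J (fun x => h x - m)%R + (2 * m ^+ 2)%:E.
Proof.
move=> mh.
have mhm : measurable_fun setT (fun x => h x - m)%R.
  by apply: measurable_funB => //; exact: measurable_cst.
apply: (@le_trans _ _ (\int[mu]_x ((2 * (h x - m) ^+ 2)%:E + (2 * m ^+ 2)%:E))).
  apply: ge0_le_integral => //.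
  - by move=> x _; rewrite lee_fin sqr_ge0.
  - exact: mJ.
  - apply: emeasurable_funD; apply/measurable_EFinP.
      by apply: measurable_funM; [exact: measurable_cst|exact: measurable_funX].
    exact: measurable_cst.
  move=> x _; rewrite -EFinD lee_fin.
  rewrite -subr_ge0 (_ : _ - _ = (h x - 2 * m) ^+ 2)%R ?sqr_ge0//; ring.
rewrite ge0_integralD//.
- have mu1 : (mu : {measure set X -> \bar R}) [set: X] = 1 by exact: probability_setT.
  rewrite integral_cst// mu1 mule1 leeD2r//.
  under eq_integral do rewrite EFinM.
  rewrite ge0_integralZl_EFin//.
  - by move=> x _; rewrite lee_fin sqr_ge0.
  - exact: mJ.
- by move=> x _; rewrite lee_fin mulr_ge0 ?sqr_ge0.
- apply/measurable_EFinP.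
  by apply: measurable_funM; [exact: measurable_cst|exact: measurable_funX].
- by move=> x _; rewrite lee_fin mulr_ge0 ?sqr_ge0.
Qed.

Lemma J_indic (h : X -> R) (m : R) (A : set X) : measurable_fun setT h ->
  measurable A -> (forall x, A x -> h x = 0%R) ->
  (m ^+ 2)%:E * mu A <= J (fun x => h x - m)%R.
Proof.
move=> mh mA hA.
have mhm : measurable_fun setT (fun x => h x - m)%R.
  by apply: measurable_funB => //; exact: measurable_cst.
apply: (@le_trans _ _ (\int[mu]_x (m ^+ 2 * \1_A x)%:E)).
  under eq_integral do rewrite EFinM.
  rewrite ge0_integralZl_EFin ?sqr_ge0//.
  - by rewrite integral_indic// setIT.
  - by apply/measurable_EFinP; exact: measurable_indic.
apply: ge0_le_integral => //.
- by move=> x _; rewrite lee_fin mulr_ge0 ?sqr_ge0.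
- apply/measurable_EFinP.
  by apply: measurable_funM; [exact: measurable_cst|exact: measurable_indic].
- exact: mJ.
move=> x _; rewrite lee_fin /indic; have [Ax|nAx] := boolP (x \in A).
  rewrite mulr1 hA ?sub0r ?sqrrN//; by move: Ax; rewrite inE.
by rewrite mulr0 sqr_ge0.
Qed.


Lemma mphi (b : X -> R) (N M : R) : measurable_fun setT b ->
  measurable_fun setT (fun x => psi N M `|b x|).
Proof.
move=> mb; rewrite /psi.
apply: measurable_minr; last exact: measurable_cst.
apply: measurable_maxr; last exact: measurable_cst.
apply: measurable_funB; last exact: measurable_cst.
apply: (@measurableT_comp _ _ _ _ _ _ (@Num.norm _ R)) => //; exact: normr_measurable.
Qed.

Lemma key (b : X -> R) (N : nat) (A : set X) (k : R) :
  measurable_fun setT b -> measurable A -> 0 < mu A ->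
  (forall x, A x -> (`|b x| <= N%:R)%R) ->
  (forall n : nat, J (fun x => psi N%:R n%:R `|b x| -
        Rintegral mu setT (fun x => psi N%:R n%:R `|b x|))%R <= (k ^+ 2)%:E) ->
  J b < +oo.
Proof.
move=> mb mA muA0 hA hk.
have muAfin : mu A \is a fin_num.
  rewrite ge0_fin_numE ?measure_ge0//.
  by apply: le_lt_trans (probability_le1 mu mA) _; exact: ltey.
set dl := fine (mu A).
have dl0 : (0 < dl)%R by rewrite fine_gt0// muA0 /= -ge0_fin_numE ?measure_ge0.
have muAE : mu A = dl%:E by rewrite fineK.
set B := (2 * k ^+ 2 + 2 * (k ^+ 2 / dl))%R.
have Jn : forall n : nat, J (fun x => psi N%:R n%:R `|b x|) <= B%:E.
  move=> n; pose m := Rintegral mu setT (fun x => psi N%:R n%:R `|b x|).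
  have h1 := @J_indic (fun x => psi N%:R n%:R `|b x|) m A (mphi _ _ mb) mA.
  have /h1 {}h1 : forall x, A x -> psi N%:R n%:R `|b x| = 0%R.
    move=> x Ax; rewrite /psi (max_idPr _).
      by apply/min_idPl.
    by rewrite subr_le0; exact: hA.
  have h2 := hk n; rewrite -/m in h2.
  have Jfin : J (fun x => psi N%:R n%:R `|b x| - m)%R \is a fin_num.
    rewrite ge0_fin_numE ?J_ge0//; apply: le_lt_trans h2 _; exact: ltey.
  move: h1 h2; rewrite -(fineK Jfin) muAE; set j := fine _ => h1 h2.
  rewrite -EFinM !lee_fin in h1 h2.
  apply: le_trans (J_split m (mphi _ _ mb)) _.
  rewrite -(fineK Jfin) -/j -EFinM -EFinD lee_fin.
  have hm : (m ^+ 2 <= k ^+ 2 / dl)%R.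
    by rewrite ler_pdivlMr//; exact: le_trans h1 h2.
  rewrite /B; lra.
pose finf x := (Num.max (`|b x| - N%:R) 0)%R.
have mfinf : measurable_fun setT finf.
  apply: measurable_maxr; last exact: measurable_cst.
  apply: measurable_funB; last exact: measurable_cst.
  by apply: (@measurableT_comp _ _ _ _ _ _ (@Num.norm _ R)) => //; exact: normr_measurable.
have finf0 x : (0 <= finf x)%R by rewrite /finf le_max lexx orbT.
pose g' n x := ((psi N%:R n%:R `|b x|) ^+ 2)%R%:E.
have mg' n : measurable_fun setT (g' n) by exact: mJ (mphi _ _ mb).
have g'0 n x : setT x -> 0 <= g' n x by move=> _; rewrite lee_fin sqr_ge0.
have nd x : setT x -> nondecreasing_seq (g' ^~ x).
  move=> _ p q pq; rewrite lee_fin /psi lerXn2r ?nnegrE ?le_min ?finf0 ?ler0n//.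
  by rewrite !ge_min lexx ler_nat pq !orbT.
have glim x : limn (g' ^~ x) = ((finf x) ^+ 2)%:E.
  apply/cvg_lim => //; apply: cvg_near_cst.
  near=> n; rewrite /g' /psi (min_idPl _) //.
  apply: ltW; apply: lt_le_trans (Num.Theory.truncnS_gt (finf x)) _.
  rewrite ler_nat; near: n; exists (Num.truncn (finf x)).+1 => //.
have Jinf : J finf <= B%:E.
  have := @cvg_monotone_convergence _ _ _ mu _ measurableT _ mg' g'0 nd.
  move/cvge_to_le => H.
  rewrite /J; under eq_integral do rewrite -glim.
  apply: H; apply: nearW => n; exact: Jn.
have Jinffin : J finf \is a fin_num.
  by rewrite ge0_fin_numE ?J_ge0//; apply: le_lt_trans Jinf _; exact: ltey.
apply: (@le_lt_trans _ _ (J (fun x => finf x + N%:R)%R)).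
  apply: J_mono => //.
    by apply: measurable_funD => //; exact: measurable_cst.
  move=> x; rewrite -[X in (X <= _)%R]real_normK ?num_real//.
  rewrite lerXn2r ?nnegrE ?addr_ge0//.
  by rewrite /finf; case: (leP (`|b x| - N%:R)%R 0%R); lra.
apply: le_lt_trans (J_split N%:R _) _.
  by apply: measurable_funD => //; exact: measurable_cst.
have -> : J (fun x => finf x + N%:R - N%:R)%R = J finf.
  by apply: eq_integral => x _; rewrite addrK.
by rewrite -(fineK Jinffin) -EFinM -EFinD ltey.
Unshelve. all: by end_near.
Qed.

Lemma mAn (b : X -> R) (n : R) : measurable_fun setT b ->
  measurable [set x | (`|b x| <= n)%R].
Proof.
move=> mb.
have mnb : measurable_fun setT (fun x => `|b x|)%R.
  by apply: (@measurableT_comp _ _ _ _ _ _ (@Num.norm _ R)) => //; exact: normr_measurable.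
have := mnb measurableT _ (measurable_itv `]-oo, n]).
rewrite setTI; congr measurable; apply/seteqP; split => x /=;
  by rewrite in_itv.
Qed.

Lemma existsN (b : X -> R) : measurable_fun setT b ->
  exists N : nat, 0 < mu [set x | (`|b x| <= N%:R)%R].
Proof.
move=> mb; apply: contrapT => hN.
have h0 n : mu [set x | (`|b x| <= n%:R)%R] = 0.
  apply/eqP; rewrite eq_le measure_ge0 andbT leNgt; apply/negP => h.
  by apply: hN; exists n.
have : mu.-negligible (\bigcup_n [set x | (`|b x| <= n%:R)%R]).
  apply: negligible_bigcup => n.
  by exists [set x | (`|b x| <= n%:R)%R]; split; [exact: mAn mb|exact: h0|].
have -> : \bigcup_n [set x | (`|b x| <= n%:R)%R] = setT.
  apply/seteqP; split => // x _.
  exists (Num.truncn `|b x|).+1 => //=.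
  exact/ltW/Num.Theory.truncnS_gt.
move=> [B [mB B0 TB]].
have BT : B = setT by apply/seteqP; split.
suff : (0 : \bar R) = 1 by move=> /(congr1 fine) /= /eqP; rewrite eq_sym oner_eq0.
by rewrite -B0 BT; exact: probability_setT.
Qed.

End H.

Lemma bigmaxe_le (R : realType) (I : Type) (s : seq I) (f g : I -> \bar R) :
  (forall i, (f i <= g i)%E) ->
  (\big[maxe/0%E]_(i <- s) f i <= \big[maxe/0%E]_(i <- s) g i)%E.
Proof.
move=> fg; elim: s => [|i s IH]; rewrite ?big_nil ?big_cons//.
by rewrite ge_max !le_max fg IH ?orbT ?orTb.
Qed.

Lemma bigmaxe_fin (R : realType) (I : Type) (s : seq I) (f : I -> \bar R) :
  (forall i, (0 <= f i)%E /\ (f i < +oo)%E) ->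
  (0 <= \big[maxe/0%E]_(i <- s) f i)%E /\ (\big[maxe/0%E]_(i <- s) f i < +oo)%E.
Proof.
move=> hf; elim: s => [|i s [IH1 IH2]]; rewrite ?big_nil ?big_cons//.
have [h1 h2] := hf i.
by split; [rewrite le_max IH1 orbT|rewrite gt_max IH2 h2].
Qed.

Unset Implicit Arguments. Set Strict Implicit. Set Printing Implicit Defensive.

Theorem theorem7p4 (G : countGroupType) (d : measure_display)
  (X : measurableType d) (R : realType) (mu : probability X R)
  (a : G -> X -> X) :
  pmp_action mu a -> spectral_gap mu a ->
  forall c1 c2 : G -> X -> R,
    (forall g, inL2 mu (c1 g)) -> cocycle mu a c1 ->
    (forall g, inL2 mu (c2 g)) -> cocycle mu a c2 ->
    (exists b : X -> R, measurable_fun setT b /\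
        coboundary_of mu a (fun g x => c1 g x - c2 g x) b) ->
    exists b : X -> R, inL2 mu b /\
        coboundary_of mu a (fun g x => c1 g x - c2 g x) b.
Proof.
move=> [_ _ ma _] [F [C [C0 SG]]] c1 c2 L1 _ L2 _ [b [mb cob]].
exists b; split => //; split => //.
pose c g x := c1 g x - c2 g x.
have mc g : measurable_fun setT (c g).
  by apply: measurable_funB; [exact: (L1 g).1|exact: (L2 g).1].
have cfin g : (L2norm mu (c g) < +oo)%E.
  have mN : measurable_fun setT (fun x => - c2 g x).
    by apply: measurableT_comp => //; exact: (L2 g).1.
  apply: le_lt_trans (@eminkowski _ _ _ mu (c1 g) (fun x => - c2 g x) 2%:E (L1 g).1 mN _) _.
    by rewrite lee_fin ler1n.
  have -> : Lnorm mu 2%:E (EFin \o (fun x => - c2 g x)) = L2norm mu (c2 g).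
    rewrite -[LHS]/(L2norm mu (fun x => - c2 g x)) !L2normE /J.
    by congr (_ `^ _)%E; apply: eq_integral => x _; rewrite sqrrN.
  by rewrite lte_add_pinfty//; [exact: (L1 g).2|exact: (L2 g).2].
pose K := \big[maxe/0%E]_(g <- F) L2norm mu (c g).
have [K0 Koo] : (0 <= K)%E /\ (K < +oo)%E.
  by apply: bigmaxe_fin => g; split; [exact: Lnorm_ge0|exact: cfin].
have Kfin : K \is a fin_num by rewrite ge0_fin_numE.
have [N muA] := existsN mu mb.
apply: (@finite_of_J _ _ _ mu b).
apply: (@key _ _ _ mu b N [set x | `|b x| <= N%:R] (C * fine K)) => //.
- exact: mAn.
move=> n.
pose fn x := psi N%:R n%:R `|b x|.
have mfn : measurable_fun setT fn := mphi _ _ mb.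
have fnL2 : inL2 mu fn.
  split => //; apply: finite_of_J.
  apply: (@le_lt_trans _ _ (J mu (fun _ => n%:R))).
    apply: J_mono; [exact: mfn|exact: measurable_cst|move=> x].
    rewrite lerXn2r ?nnegrE ?ler0n//.
      by rewrite /fn /psi le_min ler0n andbT le_max lexx orbT.
    by rewrite /fn /psi ge_min lexx orbT.
  rewrite /J integral_cst//.
  have mu1 : (mu : {measure set X -> \bar R}) [set: X] = 1%E by exact: probability_setT.
  by rewrite mu1 mule1 ltey.
have := SG fn fnL2.
set m := Rintegral _ _ _ => hS.
have hS2 : (L2norm mu (fun x => fn x - m)%R <= (C * fine K)%:E)%E.
  apply: le_trans hS _; rewrite EFinM fineK//.
  apply: lee_wpmul2l; first by rewrite lee_fin ltW.
  apply: bigmaxe_le => g; apply: L2norm_le.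
  - apply: measurable_funB => //.
    by apply: measurableT_comp => //; exact: ma.
  - exact: mc.
  apply: filterS (cob g) => x /=; rewrite /c => ->.
  by rewrite /koopman /fn psi_lip2.
rewrite J_L2norm.
have -> : (((C * fine K) ^+ 2)%:E = ((C * fine K)%:E) `^ 2)%E.
  by rewrite poweR_EFin powR_mulrn// mulr_ge0 ?(ltW C0) ?fine_ge0.
apply: gt0_ler_poweR => //.
- by rewrite in_itv/= Lnorm_ge0 leey.
- by rewrite in_itv/= lee_fin mulr_ge0 ?(ltW C0) ?fine_ge0// leey.
Qed.
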